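(* Let $\mathcal{X}$ be a nonempty closed domain set whose closed convex hull $\operatorname{clconv}(\mathcal{X})$ contains no line, and let $0\le \tilde m\le m$ be integers. The following are equivalent: (a) (Inclusive face) every face $F$ of $\operatorname{clconv}(\mathcal{X})$ of dimension at most $\tilde m$ satisfies $F\subseteq\mathcal{X}$, i.e. $F\subseteq \mathcal{X}$ for all $F\in\mathcal{F}^{\tilde m}(\operatorname{clconv}(\mathcal{X}))$; (b) (Extreme point exactness) for every choice of $m$ LMIs of dimension $\tilde m$, every extreme point of $\mathcal{C}_{\mathrm{rel}}$ belongs to $\mathcal{C}$, i.e. $\operatorname{ext}(\mathcal{C}_{\mathrm{rel}})\subseteq\mathcal{C}$.
   Context: Let $\mathcal{Q}$ be one of the matrix spaces $\mathbb{S}^n_+$ (positive semidefinite $n\times n$ matrices), $\mathbb{S}^n$ (symmetric $n\times n$ matrices) or $\mathbb{R}^{n\times p}$, where $k\le n\le p$ are positive integers; matrices are paired by the trace inner product $\langle A,X\rangle=\operatorname{tr}(A^\top X)$. A domain set is a set of the form $\mathcal{X}=\{X\in\mathcal{Q}:\operatorname{rank}(X)\le k,\ F_j(X)\le 0\ \forall j\in[t]\}$ with each $F_j:\mathcal{Q}\to\mathbb{R}$ continuous (possibly nonconvex). $\operatorname{clconv}$ denotes the closed convex hull. A system of $m$ LMIs is given by matrices $A_1,\dots,A_m$ (of the same size as elements of $\mathcal{Q}$, possibly non-symmetric) and bounds $-\infty\le b_i^l\le b_i^u\le+\infty$; its dimension $\tilde m$ is the dimension of the linear span of $A_1,\dots,A_m$.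 For such a system put $\mathcal{C}=\{X\in\mathcal{X}: b_i^l\le\langle A_i,X\rangle\le b_i^u\ \forall i\in[m]\}$ and $\mathcal{C}_{\mathrm{rel}}=\{X\in\operatorname{clconv}(\mathcal{X}): b_i^l\le\langle A_i,X\rangle\le b_i^u\ \forall i\in[m]\}$. A face of a closed convex set $D$ is a convex subset $F\subseteq D$ such that whenever a segment $[a,b]\subseteq D$ has $(a,b)\cap F\neq\emptyset$ then $[a,b]\subseteq F$; its dimension is that of its affine hull. $\mathcal{F}^d(D)$ denotes the collection of faces of $D$ of dimension at most $d$; $\operatorname{ext}(D)$ is the set of extreme points of $D$. *)

(* Defs.v *)
From HB Require Import structures.
From mathcomp Require Import all_boot all_order all_algebra.
From mathcomp Require Import all_classical all_reals all_analysis.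
Set Implicit Arguments. Unset Strict Implicit. Unset Printing Implicit Defensive.
Import Order.TTheory GRing.Theory Num.Theory.
Import numFieldNormedType.Exports.
Local Open Scope classical_set_scope.
Local Open Scope ring_scope.

Section Defs.
Variables (R : realType) (n p : nat).
Notation M := 'M[R]_(n, p).

Definition tip (A X : M) : R := \tr (A^T *m X).

Definition symmx (X : M) : Prop :=
  n = p /\ forall (i i' : 'I_n) (j j' : 'I_p),
    val i = val j' -> val j = val i' -> X i j = X i' j'.

Definition Rect_space : set M := setT.
Definition Sym_space : set M := [set X | symmx X].
Definition PSD_space : set M :=
  [set X | symmx X /\ forall v : nat -> R,
     0 <= \sum_(i < n) \sum_(j < p) v (val i) * X i j * v (val j)].

Definition domain_set (Q : set M) (k t : nat) (F : 'I_t -> M -> R) : set M :=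
  [set X | Q X /\ (\rank X <= k)%N /\ forall j, F j X <= 0].

Definition conv (S : set M) : set M :=
  [set X | exists (N : nat) (w : 'I_N -> R) (x : 'I_N -> M),
     (forall i, 0 <= w i) /\ \sum_(i < N) w i = 1 /\ (forall i, S (x i)) /\
     X = \sum_(i < N) w i *: x i].

Definition clconv (S : set M) : set M := closure (conv S).

Definition segment (a b : M) : set M :=
  [set (1 - s) *: a + s *: b | s in `[0, 1]%classic].
Definition open_segment (a b : M) : set M :=
  [set (1 - s) *: a + s *: b | s in `]0, 1[%classic].

Definition convex_set (S : set M) : Prop :=
  forall a b, S a -> S b -> segment a b `<=` S.

Definition face (D F : set M) : Prop :=
  convex_set F /\ F `<=` D /\
  forall a b, segment a b `<=` D -> open_segment a b `&` F !=set0 ->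
     segment a b `<=` F.

(* dimension of the affine hull of S is at most d (the empty set has
   dimension -1) *)
Definition affdim_le (S : set M) (d : nat) : Prop :=
  S = set0 \/ exists x0, S x0 /\ exists v : 'I_d -> M,
     forall x, S x -> exists c : 'I_d -> R, x - x0 = \sum_(i < d) c i *: v i.

Definition faces_le (D : set M) (d : nat) : set (set M) :=
  [set F | face D F /\ affdim_le F d].

Definition extreme_point (D : set M) (x : M) : Prop :=
  D x /\ forall a b, D a -> D b -> open_segment a b x -> a = b.

Definition contains_no_line (D : set M) : Prop :=
  ~ exists x d : M, d != 0 /\ forall s : R, D (x + s *: d).

Definition lmi_dim (m : nat) (A : 'I_m -> M) : nat :=
  \rank (\matrix_(i < m) mxvec (A i)).

Definition lmi_cut (m : nat) (A : 'I_m -> M) (bl bu : 'I_m -> \bar R)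
  (S : set M) : set M :=
  [set X | S X /\ forall i, (bl i <= (tip (A i) X)%:E)%E /\
                            ((tip (A i) X)%:E <= bu i)%E].

End Defs.

(* Main.v *)
Set Warnings "-notation-overridden -ambiguous-paths -notation-incompatible-prefix".
Require Import Defs.
From HB Require Import structures.
From mathcomp Require Import all_boot all_order all_algebra.
From mathcomp Require Import all_classical all_reals all_analysis.
From mathcomp Require Import ring lra.
Import Order.TTheory GRing.Theory Num.Theory.
Import numFieldNormedType.Exports.
Local Open Scope classical_set_scope.
Local Open Scope ring_scope.
Section LA.
Variables (R : realType).
Lemma pad_sub (a k N : nat) (T : 'M[R]_(a, N)) : (\rank T <= k)%N ->
  (((@pid_mx R k N (\rank T)) *m row_ebase T <= T)%MS /\
   (T <= (@pid_mx R k N (\rank T)) *m row_ebase T)%MS).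
Proof.
move=> rk; set r := \rank T.
have e1 : (row_base T <= T)%MS.
  by rewrite eq_row_base.
have e2 : (T <= row_base T)%MS.
  by rewrite eq_row_base.
split.
  apply: submx_trans e1.
  have -> : (@pid_mx R k N r) = (@pid_mx R k r r) *m pid_mx r.
    by rewrite pid_mx_id.
  by rewrite -mulmxA submxMl.
apply: (submx_trans e2).
rewrite /row_base -/r.
have -> : (@pid_mx R r N r) = (@pid_mx R r k r) *m pid_mx r.
  by rewrite pid_mx_id.
by rewrite -mulmxA submxMl.
Qed.
Lemma extend_rank (mt m N : nat) (V : 'M[R]_(mt, N)) : (mt <= m)%N -> (mt <= N)%N ->
  exists Amat : 'M[R]_(m, N), \rank Amat = mt /\ (V <= Amat)%MS.
Proof.
move=> hm hN.
set rV := \rank V.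
have rVmt : (rV <= mt)%N by exact: rank_leq_row.
set E2 := (@pid_mx R (mt - rV) (\rank (complmx V)) (mt - rV)) *m row_base (complmx V).
have rE2 : \rank E2 = (mt - rV)%N.
  rewrite /E2 mxrankMfree ?row_base_free // rank_pid_mx // mxrank_compl.
  by rewrite leq_sub2r.
have E2C : (E2 <= (complmx V))%MS.
  by rewrite /E2 (submx_trans (submxMl _ _)) // eq_row_base.
have cap0 : (V :&: E2)%MS = 0.
  apply/eqP; rewrite -submx0 -(capmx_compl V).
  by rewrite capmxS.
set T := (V + E2)%MS.
have rT : \rank T = mt by rewrite /T mxrank_disjoint_sum // rE2 subnKC.
have rTm : (\rank T <= m)%N by rewrite rT.
have [s1 s2] := pad_sub _ m _ T rTm.
exists ((@pid_mx R m N (\rank T)) *m row_ebase T); split.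
  by rewrite -rT; apply/eqmx_rank/andP; split.
by apply: submx_trans s2; rewrite /T addsmxSl.
Qed.
Lemma span_bound (m mt N : nat) (Amat : 'M[R]_(m, N)) (S : set 'rV[R]_N) :
  \rank Amat = mt -> S 0 -> (forall u v, S u -> S v -> S (u + v)) ->
  (forall c u, S u -> S (c *: u)) ->
  (forall u, S u -> u *m Amat^T = 0 -> u = 0) ->
  exists D : 'M[R]_(mt, N), forall u, S u -> (u <= D)%MS.
Proof.
move=> rA S0 SD SZ Sinj.
pose fam (U : 'M[R]_N) := forall w : 'rV_N, (w <= U)%MS -> S w.
have famS U w : fam U -> (w <= U)%MS -> S w by move=> fU; apply: fU.
have [U [fU maxU]] : exists U, fam U /\ forall u, S u -> (u <= U)%MS.
  apply: contrapT => H.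
  have step : forall U, fam U -> exists U', fam U' /\ (\rank U < \rank U')%N.
    move=> U fU.
    have [u [Su nu]] : exists u, S u /\ ~~ (u <= U)%MS.
      apply: contrapT => hne; apply: H; exists U; split => // u Su.
      apply: contrapT => hu; apply: hne; exists u; split => //; exact/negP.
    exists (U + u)%MS; split.
      move=> w /sub_addsmxP [[a b] /= ->]; apply: SD.
        by apply: fU; rewrite submxMl.
      by rewrite [b]mx11_scalar mul_scalar_mx; apply: SZ.
    apply: rank_ltmx; rewrite ltmxE addsmxSl /=; apply: contra nu => hU.
    exact: submx_trans (addsmxSr _ _) hU.
  have big : forall k, exists U, fam U /\ (k <= \rank U)%N.
    elim=> [|k [U [fU hk]]].
      exists 0; split => //; move=> w; rewrite submx0 => /eqP ->; exact: S0.
    have [U' [fU' hU']] := step U fU; exists U'; split => //.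
    exact: leq_ltn_trans hk hU'.
  have [U [_ hU]] := big N.+1.
  by move: (leq_trans hU (rank_leq_col U)); rewrite ltnn.
have cap0 : (U :&: kermx Amat^T)%MS = 0.
  apply/eqP/rowV0P => v hv; apply: Sinj.
    by apply: fU; apply: submx_trans hv (capmxSl _ _).
  by apply/sub_kermxP; apply: submx_trans hv (capmxSr _ _).
have rK : \rank (kermx Amat^T) = (N - mt)%N by rewrite mxrank_ker mxrank_tr rA.
have mtN : (mt <= N)%N by rewrite -rA rank_leq_col.
have rU : (\rank U <= mt)%N.
  have := rank_leq_col (U + kermx Amat^T)%MS.
  rewrite mxrank_disjoint_sum // rK.
  by move=> h; rewrite -(leq_add2r (N - mt)) subnKC.
have [s1 s2] := pad_sub _ mt _ U rU.
exists ((@pid_mx R mt N (\rank U)) *m row_ebase U) => u Su.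
exact: submx_trans (maxU u Su) s2.
Qed.
End LA.
Section S.
Variables (R : realType) (n p : nat).
Notation M := 'M[R]_(n, p).
Lemma tip_vec (A X : M) : tip A X = \sum_k mxvec A 0 k * mxvec X 0 k.
Proof.
rewrite /tip /mxtrace.
rewrite (reindex (fun ij : 'I_n * 'I_p => mxvec_index ij.1 ij.2)); last first.
  exists (fun k => enum_val (cast_ord (esym (mxvec_cast n p)) k)) => [ij _|k _].
    by rewrite /mxvec_index cast_ordK enum_rankK; case: ij.
  by rewrite /mxvec_index -surjective_pairing enum_valK cast_ordKV.
under eq_bigr do rewrite !mxvecE.
rewrite -(pair_big predT predT (fun i j => A i j * X i j)) /= exchange_big /=.
by apply: eq_bigr => j _; rewrite !mxE; apply: eq_bigr => i _; rewrite !mxE.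
Qed.
Lemma tip_mx m (A : 'I_m -> M) (X : M) i :
  (mxvec X *m (\matrix_(i < m) mxvec (A i))^T) 0 i = tip (A i) X.
Proof.
rewrite tip_vec !mxE; apply: eq_bigr => k _; rewrite !mxE mulrC.
by []. Qed.
Lemma Amat_tip m (A : 'I_m -> M) (X : M) :
  mxvec X *m (\matrix_(i < m) mxvec (A i))^T = \row_i tip (A i) X.
Proof. by apply/rowP => i; rewrite tip_mx mxE. Qed.

Lemma LA3 m mt (A : 'I_m -> M) (S : set M) : lmi_dim A = mt -> S 0 ->
  (forall u v, S u -> S v -> S (u + v)) -> (forall c u, S u -> S (c *: u)) ->
  (forall d, S d -> (forall i, tip (A i) d = 0) -> d = 0) ->
  exists v : 'I_mt -> M, forall d, S d -> exists c : 'I_mt -> R, d = \sum_j c j *: v j.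
Proof.
move=> rA S0 SD SZ Sinj.
have [D HD] : exists D : 'M[R]_(mt, n * p),
    forall u, S (vec_mx u) -> (u <= D)%MS.
  apply: (@span_bound R m mt _ (\matrix_(i < m) mxvec (A i)) (fun u => S (vec_mx u)) rA).
  - by rewrite linear0.
  - by move=> u v Su Sv; rewrite linearD; apply: SD.
  - by move=> c u Su; rewrite linearZ; apply: SZ.
  move=> u Su hu; rewrite -[u]vec_mxK (Sinj _ Su) ?linear0 // => i.
  move/rowP: hu => /(_ i); rewrite -{1}[u]vec_mxK Amat_tip !mxE.
  done.
exists (fun j => vec_mx (row j D)) => d Sd.
have : (mxvec d <= D)%MS by apply: HD; rewrite mxvecK.
case/submxP => w hw; exists (fun j => w 0 j).
by rewrite -[d]mxvecK hw mulmx_sum_row linear_sum; apply: eq_bigr => j _; rewrite linearZ.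
Qed.
Lemma LB m mt (v : 'I_mt -> M) : (mt <= m)%N -> (mt <= n * p)%N ->
  exists A : 'I_m -> M, lmi_dim A = mt /\
   forall c : 'I_mt -> R, (forall i, tip (A i) (\sum_j c j *: v j) = 0) ->
     \sum_j c j *: v j = 0.
Proof.
move=> hm hN.
have [Amat [rA sVA]] := @extend_rank R mt m _ (\matrix_(j < mt) mxvec (v j)) hm hN.
have eA : \matrix_(i < m) mxvec (vec_mx (row i Amat)) = Amat.
  by apply/matrixP => i j; rewrite mxE vec_mxK mxE.
exists (fun i => vec_mx (row i Amat)); split; first by rewrite /lmi_dim eA.
move=> c hc; set y := \sum_j c j *: v j.
have hy : mxvec y = (\row_j c j) *m \matrix_(j < mt) mxvec (v j).
  rewrite mulmx_sum_row /y linear_sum; apply: eq_bigr => j _.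
  by rewrite linearZ rowK mxE.
have : (mxvec y <= Amat)%MS by rewrite hy; apply: submx_trans sVA; apply: submxMl.
case/submxP => w hw.
have h0 : mxvec y *m Amat^T = 0.
  by rewrite -eA Amat_tip; apply/rowP => i; rewrite !mxE hc.
have h1 : mxvec y *m (mxvec y)^T = 0.
  by rewrite {2}hw trmx_mul mulmxA h0 mul0mx.
have h2 : mxvec y = 0.
  apply/rowP => k; rewrite mxE.
  move/matrixP: h1 => /(_ 0 0); rewrite !mxE => /eqP.
  rewrite psumr_eq0 => [/allP hk|i _]; last by rewrite mxE -expr2 sqr_ge0.
  have := hk k (mem_index_enum k); rewrite mxE -expr2 sqrf_eq0 => /eqP.
  done.
by rewrite -[y]mxvecK h2 linear0.
Qed.
Lemma tipDZ (A X Y : M) c : tip A (X + c *: Y) = tip A X + c * tip A Y.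
Proof. by rewrite /tip mulmxDr -scalemxAr mxtraceD mxtraceZ. Qed.

Lemma seg_mem (a b : M) s : 0 <= s -> s <= 1 -> Defs.segment a b ((1 - s) *: a + s *: b).
Proof. by move=> s0 s1; exists s => //=; rewrite in_itv /= s0 s1. Qed.

Lemma oseg_mem (a b : M) s : 0 < s -> s < 1 -> Defs.open_segment a b ((1 - s) *: a + s *: b).
Proof. by move=> s0 s1; exists s => //=; rewrite in_itv /= s0 s1. Qed.

Lemma cvx (C : set M) a b s : Defs.convex_set C -> C a -> C b -> 0 <= s -> s <= 1 ->
  C ((1 - s) *: a + s *: b).
Proof. by move=> cC Ca Cb s0 s1; apply: (cC a b Ca Cb); apply: seg_mem. Qed.

Lemma seg_l (a b : M) : Defs.segment a b a.
Proof. by have := @seg_mem a b 0 (lexx _) ler01; rewrite subr0 scale1r scale0r addr0. Qed.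
Lemma seg_r (a b : M) : Defs.segment a b b.
Proof. by have := @seg_mem a b 1 ler01 (lexx _); rewrite subrr scale0r scale1r add0r. Qed.

Lemma AtoB (D X : set M) m mt (A : 'I_m -> M) bl bu x :
  Defs.convex_set D -> (forall G, faces_le D mt G -> G `<=` X) ->
  lmi_dim A = mt -> extreme_point (lmi_cut A bl bu D) x -> X x.
Proof.
move=> DC ha rA [[Dx cx] xext].
pose Sd (d : M) := exists e, 0 < e /\ forall s, `|s| <= e -> D (x + s *: d).
have S0 : Sd 0 by exists 1; split => // s _; rewrite scaler0 addr0.
have SZ : forall c u, Sd u -> Sd (c *: u).
  move=> c u [e [e0 he]]; have [->|c0] := eqVneq c 0; first by rewrite scale0r.
  have cp : 0 < `|c| by rewrite normr_gt0.
  exists (e / `|c|); split; first exact: divr_gt0.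
  move=> s hs; rewrite scalerA; apply: he; rewrite normrM.
  by rewrite -ler_pdivlMr.
have SD : forall u v, Sd u -> Sd v -> Sd (u + v).
  move=> u v [e1 [e10 h1]] [e2 [e20 h2]].
  have key : forall e, 0 < e -> e <= e1 -> e <= e2 -> Sd (u + v).
    move=> e e0 ee1 ee2; exists (e / 2); split; first by rewrite divr_gt0.
    move=> s hs.
    have hs2 : `|2 * s| <= e by rewrite normrM ger0_norm // -ler_pdivlMl // mulrC.
    have := @cvx D _ _ (1/2) DC (h1 _ (le_trans hs2 ee1)) (h2 _ (le_trans hs2 ee2)).
    have -> : (1 - 1/2) *: (x + (2 * s) *: u) + 1/2 *: (x + (2 * s) *: v) = x + s *: (u + v).
      by apply/matrixP => i j; rewrite !mxE; field.
    by apply; lra.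
  have [h|h] := leP e1 e2; first exact: (key e1 e10 (lexx _) h).
  exact: (key e2 e20 (ltW h) (lexx _)).
have Sinj : forall d, Sd d -> (forall i, tip (A i) d = 0) -> d = 0.
  move=> d [e [e0 he]] hd.
  have inC : forall s, `|s| <= e -> lmi_cut A bl bu D (x + s *: d).
    move=> s hs; split; first exact: he.
    by move=> i; rewrite tipDZ hd mulr0 addr0; exact: cx i.
  have hp : `|e| <= e by rewrite gtr0_norm.
  have hm : `|-e| <= e by rewrite normrN gtr0_norm.
  have hx := @oseg_mem (x + (-e) *: d) (x + e *: d) (1/2).
  have ex : (1 - 1/2) *: (x + (-e) *: d) + 1/2 *: (x + e *: d) = x.
    by apply/matrixP => i j; rewrite !mxE; field.
  rewrite ex in hx.
  have h12 : 0 < 1/2 :> R by lra.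
  have h12' : 1/2 < 1 :> R by lra.
  have heq := xext _ _ (inC _ hm) (inC _ hp) (hx h12 h12').
  apply/matrixP => i j; move/matrixP: heq => /(_ i j); rewrite !mxE => h.
  have : e * d i j = 0 by lra.
  by move/eqP; rewrite mulf_eq0 gt_eqF // => /eqP.
have [v hv] := @LA3 m mt A Sd rA S0 SD SZ Sinj.
pose G := [set y | D y /\ Sd (y - x)].
apply: (ha G); last by split => //; rewrite subrr.
split; last first.
  right; exists x; split; first by split => //; rewrite subrr.
  by exists v => y [_ Sy]; exact: hv.
split.
  move=> a b [Da Sa] [Db Sb] _ [s s01 <-]; move: s01 => /=.
  rewrite in_itv /= => /andP[s0 s1]; split; first exact: cvx.
  have -> : (1 - s) *: a + s *: b - x = (1 - s) *: (a - x) + s *: (b - x).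
    by apply/matrixP => i j; rewrite !mxE; ring.
  exact: SD (SZ _ _ Sa) (SZ _ _ Sb).
split; first by move=> y [].
move=> a b sab [z [[s s01 zE] [Dz Sz]]] w [u u01 <-].
move: s01 u01 => /=; rewrite !in_itv /= => /andP[s0 s1] /andP[u0 u1].
have Sba : Sd (b - a).
  have [e0 [e00 he0]] := Sz.
  have p1 : D (x + (-e0) *: (z - x)) by apply: he0; rewrite normrN gtr0_norm.
  pose beta := e0 / (1 + e0); pose mu := s * (1 - s).
  have betap : 0 < beta by rewrite /beta; apply: divr_gt0; lra.
  have beta1 : beta <= 1 by rewrite /beta ler_pdivrMr; lra.
  have mup : 0 < mu by rewrite /mu mulr_gt0 // subr_gt0.
  exists (beta * mu); split; first exact: mulr_gt0.
  move=> t ht; pose del := t / beta.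
  have hdel : `|del| <= mu.
    by rewrite /del normrM normfV (gtr0_norm betap) ler_pdivrMr // mulrC.
  move: hdel; rewrite ler_norml => /andP[dl du].
  have q : D ((1 - (s + del)) *: a + (s + del) *: b).
    by apply: sab; apply: seg_mem; rewrite /mu in dl du; nra.
  have := @cvx D _ _ beta DC p1 q (ltW betap) beta1.
  have -> : (1 - beta) *: (x + (-e0) *: (z - x)) +
      beta *: ((1 - (s + del)) *: a + (s + del) *: b) = x + t *: (b - a).
    rewrite -zE; apply/matrixP => i j; rewrite !mxE /del /beta.
    by field; rewrite !gt_eqF //; lra.
  by [].
split; first by apply: sab; exists u => //=; rewrite in_itv /= u0 u1.
have -> : (1 - u) *: a + u *: b - x = (z - x) + (u - s) *: (b - a).
  by rewrite -zE; apply/matrixP => i j; rewrite !mxE; ring.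
exact: SD Sz (SZ _ _ Sba).
Qed.
Lemma BtoA (D X : set M) m mt : Defs.convex_set D -> (mt <= m)%N -> (mt <= n * p)%N ->
  (forall (A : 'I_m -> M) (bl bu : 'I_m -> \bar R),
      (forall i, (bl i <= bu i)%E) -> lmi_dim A = mt ->
      extreme_point (lmi_cut A bl bu D) `<=` lmi_cut A bl bu X) ->
  forall G, faces_le D mt G -> G `<=` X.
Proof.
move=> DC hm hN hb G [[Gconv [GD Gface]] Gdim] y Gy.
case: Gdim => [G0|[x0 [Gx0 [v hv]]]]; first by rewrite G0 in Gy.
have [A [rA Ainj]] := @LB m mt v hm hN.
have := hb A (fun i => (tip (A i) y)%:E) (fun i => (tip (A i) y)%:E) (fun i => lexx _) rA y.
case; last by [].
split; first by split; [exact: GD | move=> i; split].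
move=> a b [Da ca] [Db cb] yab.
have sab := DC a b Da Db.
have sG := Gface a b sab (ex_intro _ y (conj yab Gy)).
have [c1 e1] := hv a (sG a (seg_l a b)).
have [c2 e2] := hv b (sG b (seg_r a b)).
have eab : a - b = \sum_j (c1 j - c2 j) *: v j.
  have -> : a - b = (a - x0) - (b - x0) by rewrite opprB addrA subrK.
  by rewrite e1 e2 -sumrB; apply: eq_bigr => j _; rewrite scalerBl.
apply/eqP; rewrite -subr_eq0; apply/eqP; rewrite eab; apply: Ainj => i; rewrite -eab.
have ta : tip (A i) a = tip (A i) y.
  by have [h1 h2] := ca i; apply/le_anti; rewrite -!lee_fin h1 h2.
have tb : tip (A i) b = tip (A i) y.
  by have [h1 h2] := cb i; apply/le_anti; rewrite -!lee_fin h1 h2.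
have := tipDZ (A i) a b (-1).
by rewrite ta tb scaleN1r mulN1r subrr.
Qed.
Lemma closure_convex (C : set M) : Defs.convex_set C -> Defs.convex_set (closure C).
Proof.
move=> cC a b ca cb _ [s s01 <-] B /nbhs_ballP [e e0 sB].
have [a' [Ca' ba']] := ca _ (nbhsx_ballx a e e0).
have [b' [Cb' bb']] := cb _ (nbhsx_ballx b e e0).
move: s01; rewrite /= in_itv /= => /andP[s0 s1].
exists ((1-s) *: a' + s *: b'); split.
  by apply: (cC _ _ Ca' Cb'); exists s => //=; rewrite in_itv /= s0 s1.
apply: sB; move: ba' bb'; rewrite -ball_normE /= => ha hb.
have -> : (1 - s) *: a + s *: b - ((1 - s) *: a' + s *: b') =
   (1 - s) *: (a - a') + s *: (b - b').
  by rewrite !scalerBr opprD !addrA; congr (_ - _); rewrite addrAC.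
apply: (le_lt_trans (ler_normD _ _)); rewrite !normrZ.
rewrite (ger0_norm s0) ger0_norm ?subr_ge0 //.
have [->|sp] := eqVneq s 0; first by rewrite subr0 !mul1r mul0r addr0.
have sp' : 0 < s by rewrite lt_neqAle eq_sym sp.
nra.
Qed.
Lemma conv_convex (C : set M) : Defs.convex_set (Defs.conv C).
Proof.
move=> a b [N1 [w1 [x1 [w10 [w11 [Cx1 ->]]]]]] [N2 [w2 [x2 [w20 [w21 [Cx2 ->]]]]]].
move=> _ [s s01 <-]; move: s01; rewrite /= in_itv /= => /andP[s0 s1].
have Hl : forall j, fintype.split (lshift N2 j) = inl j := fun j => unsplitK (inl j).
have Hr : forall j, fintype.split (rshift N1 j) = inr j := fun j => unsplitK (inr j).
exists (N1 + N2)%N.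
exists (fun i => match fintype.split i with inl j => (1 - s) * w1 j | inr j => s * w2 j end).
exists (fun i => match fintype.split i with inl j => x1 j | inr j => x2 j end).
split; first by move=> i; case: (fintype.split i) => j; apply: mulr_ge0; rewrite ?subr_ge0.
split; first by rewrite big_split_ord /=; under eq_bigr do rewrite Hl; under [X in _ + X]eq_bigr do rewrite Hr;
  rewrite -!mulr_sumr w11 w21 !mulr1 subrK.
split; first by move=> i; case: (fintype.split i).
symmetry; rewrite big_split_ord /=; under eq_bigr do rewrite Hl; under [X in _ + X = _]eq_bigr do rewrite Hr.
by rewrite !scaler_sumr; congr (_ + _); apply: eq_bigr => i _; rewrite scalerA.
Qed.
End S.

Theorem theorem1 (R : realType) (k n p : nat) (Q : set 'M[R]_(n, p))
  (t : nat) (F : 'I_t -> 'M[R]_(n, p) -> R) (m mt : nat) :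
  (k <= n)%N -> (n <= p)%N ->
  (Q = @Rect_space R n p \/ (n = p /\ Q = @Sym_space R n p) \/
   (n = p /\ Q = @PSD_space R n p)) ->
  (forall j, {within Q, continuous F j}) ->
  domain_set Q k F !=set0 ->
  closed (domain_set Q k F) ->
  contains_no_line (clconv (domain_set Q k F)) ->
  (mt <= m)%N -> (mt <= n * p)%N ->
  ((forall G, faces_le (clconv (domain_set Q k F)) mt G ->
      G `<=` domain_set Q k F)
   <->
   (forall (A : 'I_m -> 'M[R]_(n, p)) (bl bu : 'I_m -> \bar R),
      (forall i, (bl i <= bu i)%E) ->
      lmi_dim A = mt ->
      extreme_point (lmi_cut A bl bu (clconv (domain_set Q k F)))
        `<=` lmi_cut A bl bu (domain_set Q k F))).
Proof.
move=> _ _ _ _ _ _ _ hm hN.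
have DC : Defs.convex_set (clconv (domain_set Q k F)).
  by apply: closure_convex; apply: conv_convex.
split.
  move=> ha A bl bu _ rA x hx; split; last by case: hx => [[_ c] _].
  exact: (@AtoB R n p _ _ m mt A bl bu x DC ha rA hx).
exact: (@BtoA R n p _ _ m mt DC hm hN).
Qed.
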